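(* Let $\mathcal N=(\mathcal V,\mathcal R)$ be a non-autocatalytic reaction network on $n$ species. Let $J(\mathbf x,\mathbf k)$ and $\tilde J(\mathbf x,\mathbf k)$ be the matrices defined in the context, viewed as functions of $\mathbf x\in\mathbb R^n_{>0}$ and $\mathbf k\in\mathbb R^{\mathcal R}_{>0}$. Suppose that for every choice of $\mathbf k>\mathbf 0$ and every positive equilibrium $\mathbf x\in\mathbb R^n_{>0}$ of the mass action system $\mathcal N_{\mathbf k}$, we have $\det J(\mathbf x,\mathbf k)\neq 0$, $\tilde J(\mathbf x,\mathbf k)_{ii}<0$ for all $i$, and $-\tilde J(\mathbf x,\mathbf k)$ is a $P_0$-matrix. Then $\mathcal N$ is delay stable.
   Context: A reaction network $\mathcal N=(\mathcal V,\mathcal R)$ is a finite directed graph whose vertices (complexes) are vectors $\mathbf y\in\mathbb R^n_{\ge 0}$; each edge $\mathbf y\to\mathbf y'$ is a reaction. A reaction $\mathbf y\to\mathbf y'$ is autocatalytic if $\mathrm{supp}(\mathbf y)\cap\mathrm{supp}(\mathbf y')\neq\emptyset$ and $y_i'>y_i$ for every $i\in\mathrm{supp}(\mathbf y)\cap\mathrm{supp}(\mathbf y')$; the network is non-autocatalytic if it has none. Write $\mathbf x^{\mathbf y}=\prod_i x_i^{y_i}$. The mass action system $\mathcal N_{\mathbf k}$ is $\dot{\mathbf x}=\sum_{\mathbf y\to\mathbf y'}k_{\mathbf y\to\mathbf y'}\mathbf x^{\mathbf y}(\mathbf y'-\mathbf y)$. Given delays $\boldsymbol\tau\in\mathbb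 R^{\mathcal R}_{\ge0}$ (one per reaction), the delay mass action system $\mathcal N_{\boldsymbol\tau,\mathbf k}$ is $\dot{\mathbf x}(t)=\sum_{\mathbf y\to\mathbf y'}k_{\mathbf y\to\mathbf y'}[\mathbf x(t-\tau_{\mathbf y\to\mathbf y'})]^{\mathbf y}\mathbf y'-\sum_{\mathbf y\to\mathbf y'}k_{\mathbf y\to\mathbf y'}[\mathbf x(t)]^{\mathbf y}\mathbf y$; its positive equilibria coincide with those of $\mathcal N_{\mathbf k}$. Define $n\times n$ matrices (row $j$, column $i$): $(J_\lambda)_{ji}(\mathbf x,\mathbf k,\boldsymbol\tau)=\sum_{\mathbf y\to\mathbf y'}k_{\mathbf y\to\mathbf y'}\mathbf x^{\mathbf y}\frac{y_i}{x_i}\big(y'_je^{-\lambda\tau_{\mathbf y\to\mathbf y'}}-y_j\big)$ for $\lambda\in\mathbb C$; $J_{ji}(\mathbf x,\mathbf k)=\sum_{\mathbf y\to\mathbf y'}k_{\mathbf y\to\mathbf y'}\mathbf x^{\mathbf y}\frac{y_i}{x_i}(y'_j-y_j)$; $\tilde J_{ji}(\mathbf x,\mathbf k)=\sum_{\mathbf y\to\mathbf y'}k_{\mathbf y\to\mathbf y'}\mathbf x^{\mathbf y}\frac{y_i}{x_i}(y'_j+y_j)$ for $j\ne i$ and $\tilde J_{ii}(\mathbf x,\mathbf k)=\sum_{\mathbf y\to\mathbf y'}k_{\mathbf y\to\mathbf y'}\mathbf x^{\mathbf y}\frac{y_i}{x_i}(y'_i-y_i)$. A $P_0$-matrix is a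 real square matrix with all principal minors non-negative. The network $\mathcal N$ is delay stable if for every $\mathbf k\in\mathbb R^{\mathcal R}_{>0}$, every $\boldsymbol\tau\in\mathbb R^{\mathcal R}_{\ge0}$ and every positive equilibrium $\mathbf x^*$ of $\mathcal N_{\boldsymbol\tau,\mathbf k}$, every root $\lambda$ of the characteristic equation $\det(J_\lambda(\mathbf x^*,\mathbf k,\boldsymbol\tau)-\lambda I)=0$ has negative real part. *)

(* Defs.v *)
From HB Require Import structures.
From mathcomp Require Import all_boot all_order all_algebra.
From mathcomp Require Import all_classical all_reals all_analysis.
From mathcomp Require Import complex.

Set Implicit Arguments.
Unset Strict Implicit.
Unset Printing Implicit Defensive.

Import Order.TTheory GRing.Theory Num.Theory.
Local Open Scope ring_scope.
Local Open Scope complex_scope.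

Section ReactionNetworks.
Variables (R : realType) (n : nat) (Rc : finType).
(* A reaction network on n species: a finite set Rc of reactions, reaction r
   being the edge  src r -> prd r  between complexes in R^n_{>=0}. *)
Variables (src prd : Rc -> 'I_n -> R).

Definition is_network : Prop :=
  [/\ forall r i, 0 <= src r i, forall r i, 0 <= prd r i,
      forall r, src r <> prd r &
      forall r1 r2, src r1 = src r2 -> prd r1 = prd r2 -> r1 = r2].

Definition autocatalytic (r : Rc) : Prop :=
  (exists i, 0 < src r i /\ 0 < prd r i) /\
  (forall i, 0 < src r i -> 0 < prd r i -> src r i < prd r i).

Definition non_autocatalytic : Prop := forall r, ~ autocatalytic r.

Definition monom (x y : 'I_n -> R) : R := \prod_(i < n) (x i `^ y i).

Definition pos_equilibrium (k : Rc -> R) (x : 'I_n -> R) : Prop :=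
  (forall i, 0 < x i) /\
  (forall j, \sum_(r : Rc) k r * monom x (src r) * (prd r j - src r j) = 0).

Definition Jmx (x : 'I_n -> R) (k : Rc -> R) : 'M[R]_n :=
  \matrix_(j < n, i < n)
    \sum_(r : Rc) k r * monom x (src r) * (src r i / x i) * (prd r j - src r j).

Definition Jtmx (x : 'I_n -> R) (k : Rc -> R) : 'M[R]_n :=
  \matrix_(j < n, i < n)
    if j == i then
      \sum_(r : Rc) k r * monom x (src r) * (src r i / x i) * (prd r i - src r i)
    else
      \sum_(r : Rc) k r * monom x (src r) * (src r i / x i) * (prd r j + src r j).

Definition cexp (z : R[i]) : R[i] :=
  Complex (expR (complex.Re z) * cos (complex.Im z)) (expR (complex.Re z) * sin (complex.Im z)).

Definition Jlam (x : 'I_n -> R) (k tau : Rc -> R) (lam : R[i]) : 'M[R[i]]_n :=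
  \matrix_(j < n, i < n)
    \sum_(r : Rc) ((k r * monom x (src r) * (src r i / x i))%:C *
       ((prd r j)%:C * cexp (- (lam * (tau r)%:C)) - (src r j)%:C))%R.

Definition delay_stable : Prop :=
  forall k : Rc -> R, (forall r, 0 < k r) ->
  forall tau : Rc -> R, (forall r, 0 <= tau r) ->
  forall x, pos_equilibrium k x ->
  forall lam : R[i], \det (Jlam x k tau lam - lam%:M) = 0 -> complex.Re lam < 0.

End ReactionNetworks.

(* P_0-matrix: every principal minor is nonnegative.  A principal submatrix is
   given by a strictly increasing selection f : 'I_m -> 'I_n of indices. *)
Definition P0_matrix (R : realType) (n : nat) (A : 'M[R]_n) : Prop :=
  forall (m : nat) (f : 'I_m -> 'I_n),
    (forall a b : 'I_m, (a < b)%N -> (f a < f b)%N) ->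
    0 <= \det (mxsub f f A).

(* Main.v *)
Require Import Defs.
From HB Require Import structures.
From mathcomp Require Import all_boot all_order all_algebra.
From mathcomp Require Import all_classical all_reals all_analysis.
From mathcomp Require Import complex.
From mathcomp Require Import zify ring lra.
Import Order.TTheory GRing.Theory Num.Theory.
Local Open Scope ring_scope.

Set Implicit Arguments. Unset Strict Implicit. Unset Printing Implicit Defensive.

Definition incr m n (f : 'I_m -> 'I_n) := forall a b : 'I_m, (a < b)%N -> (f a < f b)%N.

Definition dmx (R : pzRingType) n (d : 'I_n -> R) : 'M[R]_n :=
  \matrix_(i, j) (if i == j then d i else 0).

Definition P0' (R : realFieldType) n (A : 'M[R]_n) :=
  forall m (f : 'I_m -> 'I_n), incr f -> 0 <= \det (mxsub f f A).

Lemma incr_comp m n p (f : 'I_m -> 'I_n) (g : 'I_n -> 'I_p) :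
  incr f -> incr g -> incr (g \o f).
Proof. by move=> hf hg a b ab /=; apply/hg/hf. Qed.

Lemma lift_lt n (K : 'I_n.+1) (a b : 'I_n) : (a < b)%N -> (lift K a < lift K b)%N.
Proof.
move=> ab; rewrite /= /bump.
by case: (leqP K a) => h1; case: (leqP K b) => h2 /=; lia.
Qed.

Lemma incr_lift n (K : 'I_n.+1) : incr (lift K).
Proof. move=> a b; exact: lift_lt. Qed.

Lemma incr_inj m n (f : 'I_m -> 'I_n) : incr f -> injective f.
Proof.
move=> hf a b e; apply/eqP; case: (ltngtP a b) => h.
- by have := hf _ _ h; rewrite e ltnn.
- by have := hf _ _ h; rewrite e ltnn.
- by apply/eqP/val_inj.
Qed.

Lemma P0'_sub (R : realFieldType) n (A : 'M[R]_n) m (f : 'I_m -> 'I_n) :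
  incr f -> P0' A -> P0' (mxsub f f A).
Proof.
move=> hf hA p g hg; rewrite -mxsub_comp; apply: hA; exact: incr_comp.
Qed.

Lemma mxsub_dmx (R : pzRingType) n (A : 'M[R]_n) d m (f : 'I_m -> 'I_n) :
  injective f -> mxsub f f (A + dmx d) = mxsub f f A + dmx (d \o f).
Proof.
move=> fi; apply/matrixP => i j; rewrite !mxE /= (inj_eq fi).
by case: eqP => // ->.
Qed.

Lemma det_change (R : comNzRingType) n (X Y : 'M[R]_n) K :
  (forall i j, (i != K) || (j != K) -> X i j = Y i j) ->
  \det X = \det Y + (X K K - Y K K) * cofactor X K K.
Proof.
move=> hXY.
have cc : forall i, cofactor X i K = cofactor Y i K.
  move=> i; rewrite /cofactor; congr (_ * \det _); apply/matrixP => a b.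
  by rewrite !mxE hXY //; have := neq_lift K b; rewrite eq_sym => ->; rewrite orbT.
rewrite (expand_det_col X K) (expand_det_col Y K).
rewrite (bigD1 K) //= [in RHS](bigD1 K) //= cc.
have -> : \sum_(i < n | i != K) X i K * cofactor X i K =
          \sum_(i < n | i != K) Y i K * cofactor Y i K.
  by apply: eq_bigr => i hi; rewrite cc hXY // hi.
ring.
Qed.

Lemma sign_double (R : pzRingType) (k : nat) : (-1) ^+ (k + k) = 1 :> R.
Proof. by rewrite -signr_odd addnn odd_double expr0. Qed.

Lemma L1 (R : realFieldType) m (M : 'M[R]_m) (d : 'I_m -> R) :
  P0' M -> (forall i, 0 <= d i) -> \prod_i d i <= \det (M + dmx d).
Proof.
elim: m M d => [|m IH] M d hM hd.
  by rewrite big_ord0 det_mx00.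
pose dk k (i : 'I_m.+1) := if (i < k)%N then d i else 0.
suff H : forall k, \prod_i dk k i <= \det (M + dmx (dk k)).
  have := H m.+1; congr (_ <= \det (M + _)).
    by apply: eq_bigr => i _; rewrite /dk ltn_ord.
  by apply/matrixP => i j; rewrite !mxE /dk ltn_ord.
have dk0 : forall k i, 0 <= dk k i by move=> k i; rewrite /dk; case: ifP.
elim => [|k IHk].
  rewrite big_ord_recl {1}/dk ltn0 mul0r.
  have -> : M + dmx (dk 0%N) = M.
    by apply/matrixP => i j; rewrite !mxE /dk ltn0 if_same addr0.
  have := hM _ id (fun a b h => h); by rewrite mxsub_id.
case: (ltnP k m.+1) => hk; last first.
  have e : forall i, dk k.+1 i = dk k i.
    move=> i; rewrite /dk.
    have h1 : (i < k)%N by apply: leq_trans (ltn_ord i) hk.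
    by rewrite h1 ltnS (ltnW h1).
  have -> : dmx (dk k.+1) = dmx (dk k) by apply/matrixP => i j; rewrite !mxE e.
  by under eq_bigr do rewrite e.
pose K := Ordinal hk.
rewrite (det_change (Y := M + dmx (dk k)) (K := K)); last first.
  move=> i j hij; rewrite !mxE; case: eqP => // eij; subst j.
  move: hij; rewrite orbb -(inj_eq val_inj) /= => hK.
  by rewrite /dk ltnS leq_eqVlt (negbTE hK).
have eK : (M + dmx (dk k.+1)) K K - (M + dmx (dk k)) K K = d K.
  rewrite !mxE eqxx /dk /= ltnn ltnSn; ring.
rewrite eK /cofactor sign_double mul1r.
have -> : row' K (col' K (M + dmx (dk k.+1))) =
          mxsub (lift K) (lift K) M + dmx (dk k.+1 \o lift K).
  apply/matrixP => i j; rewrite !mxE (inj_eq (@lift_inj _ K)).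
  by case: eqP => // ->.
have hsub := IH _ (dk k.+1 \o lift K) (P0'_sub (incr_lift K) hM) (fun i => dk0 _ _).
rewrite (bigD1_ord K) //=.
have hK0 : \prod_i dk k i = 0.
  by rewrite (bigD1_ord K) //= {1}/dk ltnn mul0r.
rewrite hK0 in IHk; rewrite {1}/dk /= ltnSn.
rewrite -[X in X <= _]add0r; apply: lerD IHk _.
by apply: ler_wpM2l; [exact: hd | exact: hsub].
Qed.

Definition schur (R : fieldType) k (C : 'M[R]_k.+1) : 'M[R]_k :=
  \matrix_(i, j) (C (lift ord0 i) (lift ord0 j) - C (lift ord0 i) ord0 * C ord0 (lift ord0 j) / C ord0 ord0).

Lemma lift0_neq n (i : 'I_n) : (lift (@ord0 n) i == ord0) = false.
Proof. by apply/negbTE; rewrite eq_sym neq_lift. Qed.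

Lemma det_schur (R : fieldType) k (C : 'M[R]_k.+1) :
  C ord0 ord0 != 0 -> \det C = C ord0 ord0 * \det (schur C).
Proof.
move=> c0.
pose E : 'M[R]_k.+1 := \matrix_(i, j)
  (if i == j then 1 else if j == ord0 then - (C i ord0 / C ord0 ord0) else 0).
have dE : \det E = 1.
  rewrite det_trig; last first.
    apply/is_trig_mxP => i j ij; rewrite mxE.
    have -> : (i == j) = false by apply/negbTE; rewrite neq_ltn ij.
    have -> : (j == ord0) = false.
      by apply/negbTE; rewrite -(inj_eq val_inj) /=; rewrite -lt0n; apply: leq_ltn_trans ij.
    by [].
  by rewrite big1 // => i _; rewrite mxE eqxx.
have DE : forall i j, (E *m C) i j =
    C i j - (if i == ord0 then 0 else C i ord0 / C ord0 ord0 * C ord0 j).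
  move=> i j; rewrite !mxE big_ord_recl !mxE.
  case: (unliftP ord0 i) => [i'|] ->.
  - rewrite lift0_neq eqxx.
    rewrite (bigD1 i') //= !mxE eqxx mul1r big1; last first.
      by move=> l hl; rewrite mxE (inj_eq (@lift_inj _ 0)) eq_sym (negbTE hl) lift0_neq mul0r.
    ring.
  - rewrite eqxx mul1r big1 ?addr0 ?subr0 // => l _.
    by rewrite mxE eq_sym !lift0_neq mul0r.
have : \det (E *m C) = \det C by rewrite det_mulmx dE mul1r.
move <-; rewrite (expand_det_col _ ord0) big_ord_recl big1; last first.
  by move=> i _; rewrite DE lift0_neq divfK // subrr mul0r.
rewrite addr0 DE eqxx subr0 /cofactor addn0 expr0 mul1r; congr (_ * \det _).
apply/matrixP => i j; rewrite mxE mxE DE lift0_neq mxE; ring.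
Qed.

Lemma L2 (R : realFieldType) m (C : 'M[R]_m) :
  (forall i j, i != j -> C i j <= 0) ->
  (forall p (f : 'I_p -> 'I_m), incr f -> 0 < \det (mxsub f f C)) ->
  forall u : 'I_m -> R, (forall i, 0 <= u i) ->
  (forall i, \sum_j C i j * u j <= 0) -> forall i, u i = 0.
Proof.
elim: m C => [|m IH] C hZ hP u hu hCu; first by case.
have c0 : 0 < C ord0 ord0.
  have := hP _ (fun _ : 'I_1 => ord0) (fun a b => ltac:(by rewrite !ord1 ltnn)).
  by rewrite det_mx11 mxE.
have hu' : forall i, u (lift ord0 i) = 0.
  apply: (IH (schur C)) => //.
  - move=> i j ij; rewrite mxE.
    have h1 : C (lift ord0 i) (lift ord0 j) <= 0 by apply: hZ; rewrite (inj_eq (@lift_inj _ 0)).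
    have h2 : C (lift ord0 i) ord0 <= 0 by apply: hZ; rewrite lift0_neq.
    have h3 : C ord0 (lift ord0 j) <= 0 by apply: hZ; rewrite eq_sym lift0_neq.
    have : 0 <= C (lift ord0 i) ord0 * C ord0 (lift ord0 j) / C ord0 ord0.
      by apply: divr_ge0; [apply: mulr_le0 | apply: ltW].
    lra.
  - move=> p f hf.
    pose g (i : 'I_p.+1) : 'I_m.+1 := if unlift ord0 i is Some j then lift ord0 (f j) else ord0.
    have hg : incr g.
      move=> a b; rewrite /g; case: (unliftP ord0 a) => [a'|] ->; case: (unliftP ord0 b) => [b'|] -> //=.
      + by rewrite /bump /= !add1n ltnS => /hf.
    have := hP _ g hg; rewrite det_schur; last first.
      by rewrite mxE /g unlift_none lt0r_neq0.
    have -> : schur (mxsub g g C) = mxsub f f (schur C).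
      by apply/matrixP => i j; rewrite !mxE /g !liftK unlift_none.
    by rewrite mxE /g unlift_none; rewrite pmulr_rgt0.
    move=> i.
    set c := C ord0 ord0; set a := C (lift ord0 i) ord0.
    have -> : \sum_j schur C i j * u (lift ord0 j) =
      (\sum_j C (lift ord0 i) (lift ord0 j) * u (lift ord0 j)) -
      a / c * (\sum_j C ord0 (lift ord0 j) * u (lift ord0 j)).
      rewrite mulr_sumr -sumrB; apply: eq_bigr => j _; rewrite mxE -/c -/a; ring.
    have r1 := hCu (lift ord0 i); rewrite big_ord_recl -/a in r1.
    have r0 := hCu ord0; rewrite big_ord_recl -/c in r0.
    have ha : a <= 0 by apply: hZ; rewrite lift0_neq.
    have hw : a / c <= 0 by apply: mulr_le0_ge0 => //; rewrite invr_ge0 ltW.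
    have wc : a / c * c = a by rewrite divfK // lt0r_neq0.
    have hu0 := hu ord0.
    move: (a / c) hw wc => w hw wc.
    set S := \sum_(j < m) _ in r1 *; set T := \sum_(j < m) _ in r0 *.
    rewrite -wc in r1; nra.
have r0 := hCu ord0; rewrite big_ord_recl big1 ?addr0 in r0; last first.
  by move=> j _; rewrite hu' mulr0.
have hu0 : u ord0 = 0.
  have := hu ord0; nra.
move=> i; case: (unliftP ord0 i) => [i'|] ->; [exact: hu' | exact: hu0].
Qed.

Local Open Scope complex_scope.

Section NC.
Variable R : realType.
Definition nc (z : R[i]) : R := Num.sqrt (complex.Re z ^+ 2 + complex.Im z ^+ 2).

Lemma ncE z : `|z| = (nc z)%:C.
Proof. by rewrite normc_def. Qed.

Lemma nc_ge0 z : 0 <= nc z.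
Proof. exact: sqrtr_ge0. Qed.

Lemma nc_sq z : nc z ^+ 2 = complex.Re z ^+ 2 + complex.Im z ^+ 2.
Proof. by rewrite sqr_sqrtr // addr_ge0 // sqr_ge0. Qed.

Lemma nc_add a b : nc (a + b) <= nc a + nc b.
Proof. by rewrite -lecR rmorphD /= -!ncE ler_normD. Qed.

Lemma nc_mul a b : nc (a * b) = nc a * nc b.
Proof. by apply: complexI; rewrite rmorphM /= -!ncE normrM. Qed.

Lemma nc_opp a : nc (- a) = nc a.
Proof. by apply: complexI; rewrite -!ncE normrN. Qed.

Lemma nc_sum (I : finType) (F : I -> R[i]) : nc (\sum_i F i) <= \sum_i nc (F i).
Proof.
rewrite -lecR rmorph_sum /= -ncE.
apply: le_trans (ler_norm_sum _ _ _) _; rewrite le_eqVlt; apply/orP; left; apply/eqP; apply: eq_bigr => i _; exact: ncE.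
Qed.

Lemma nc_real t : nc t%:C = `|t|.
Proof. by rewrite /nc /= expr0n /= addr0 sqrtr_sqr. Qed.

Lemma nc_eq0 z : nc z = 0 -> z = 0.
Proof. by move=> h; apply/normr0_eq0; rewrite ncE h. Qed.

Lemma Re_le_nc z : complex.Re z <= nc z.
Proof.
have := nc_sq z; have := nc_ge0 z; have := sqr_ge0 (complex.Im z). nra.
Qed.

Lemma nc_cexp z : nc (cexp z) = expR (complex.Re z).
Proof.
rewrite /nc /cexp /= !exprMn -mulrDr cos2Dsin2 mulr1 sqrtr_sqr.
by rewrite ger0_norm // ltW // expR_gt0.
Qed.
End NC.
Arguments nc {R} z.

Lemma diag_arg (R : realType) (Rs Is Rl Il a b N Ns : R) :
  0 <= Ns -> Ns ^+ 2 = Rs ^+ 2 + Is ^+ 2 -> Ns <= a -> 0 <= N ->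
  N ^+ 2 = (Rs - b - Rl) ^+ 2 + (Is - Il) ^+ 2 -> 0 <= Rl -> a - b < 0 ->
  N <= b - a -> Rl = 0 /\ Il = 0.
Proof.
move=> hNs eNs hNsa hN eN hRl hab hNb.
have h1 : Rs <= a.
  have : Rs <= Ns by have := sqr_ge0 Is; nra.
  lra.
have h2 : b + Rl - Rs <= N by have := sqr_ge0 (Is - Il); nra.
have eRl : Rl = 0 by lra.
have eRs : Rs = a by lra.
subst Rl Rs.
have eI : Is = Il.
  have : (Is - Il) ^+ 2 <= 0 by nra.
  have := sqr_ge0 (Is - Il); nra.
subst Il.
split => //.
have : Is ^+ 2 <= 0 by nra.
have := sqr_ge0 Is; nra.
Qed.

Lemma term_bound (R : realType) (c p s : R) (e : R[i]) :
  0 <= c -> 0 <= p -> 0 <= s -> nc e <= 1 ->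
  nc (c%:C * (p%:C * e - s%:C)) <= c * (p + s).
Proof.
move=> hc hp hs he.
rewrite nc_mul nc_real ger0_norm //; apply: ler_wpM2l => //.
apply: le_trans (nc_add _ _) _; rewrite nc_opp nc_mul !nc_real !ger0_norm //.
have := ler_wpM2l hp he; rewrite mulr1; lra.
Qed.

Unset Implicit Arguments.

Theorem corollary1 (R : realType) (n : nat) (Rc : finType)
    (src prd : Rc -> 'I_n -> R) :
  is_network src prd ->
  non_autocatalytic src prd ->
  (forall k : Rc -> R, (forall r, 0 < k r) ->
   forall x : 'I_n -> R, pos_equilibrium src prd k x ->
     [/\ \det (Jmx src prd x k) != 0,
         forall i : 'I_n, Jtmx src prd x k i i < 0 &
         P0_matrix (- Jtmx src prd x k)]) ->
  delay_stable src prd.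
Proof.
move=> hnet _ hyp k hk tau htau x [hx heq] lam hdet.
case: hnet => hsrc hprd _ _.
have [hJ hdiag hP0] := hyp k hk x (conj hx heq).
rewrite ltNge; apply/negP => hre.
pose c r i := k r * monom x (src r) * (src r i / x i).
have hc : forall r i, 0 <= c r i.
  move=> r i; apply: mulr_ge0; [apply: mulr_ge0; [exact: ltW | ] | ].
  - by apply: prodr_ge0 => j _; apply: powR_ge0.
  - by apply: divr_ge0 => //; apply: ltW.
have [lam0|lam0] := eqVneq lam 0.
  move: hdet; rewrite lam0; have -> : Jlam src prd x k tau 0 - 0%:M =
     map_mx (real_complex R) (Jmx src prd x k).
    apply/matrixP => i j; rewrite !mxE mul0rn subr0 rmorph_sum /=.
    apply: eq_bigr => r _.
    have -> : cexp (- (0 * (tau r)%:C)) = 1.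
      by rewrite mul0r oppr0 /cexp /= expR0 cos0 sin0 !mul1r.
    by rewrite mulr1 -rmorphB -rmorphM.
  by rewrite det_map_mx /= => /complexI; apply/eqP.
pose e r := cexp (- (lam * (tau r)%:C)).
have he : forall r, nc (e r) <= 1.
  move=> r; rewrite /e nc_cexp expR_le1.
  clear -hre htau; move: hre; case: lam => a b /= ha.
  rewrite mulr0 subr0 oppr_le0; apply: mulr_ge0 => //.
set B := Jlam src prd x k tau lam - lam%:M.
have /det0P [v v0 vB] : \det B^T == 0 by rewrite det_tr hdet.
pose u i := nc (v ord0 i).
have K1 : forall i, \sum_j B i j * v ord0 j = 0.
  move=> i; move/matrixP: (vB) => /(_ ord0 i); rewrite !mxE => h; rewrite -[RHS]h.
  by apply: eq_bigr => j _; rewrite [B^T _ _]mxE mulrC.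
have Boff : forall i j, i != j ->
    B i j = \sum_r (c r j)%:C * ((prd r i)%:C * e r - (src r i)%:C).
  by move=> i j ij; rewrite /B !mxE (negbTE ij) mulr0n subr0.
have K3 : forall i j, i != j -> nc (B i j) <= Jtmx src prd x k i j.
  move=> i j ij; rewrite Boff // mxE (negbTE ij); apply: le_trans (nc_sum _) _.
  by apply: ler_sum => r _; apply: term_bound.
have K4 : forall i, - Jtmx src prd x k i i < nc (B i i).
  move=> i.
  have eB : B i i = (\sum_r ((c r i * prd r i)%:C * e r)) - (\sum_r c r i * src r i)%:C - lam.
    rewrite /B !mxE eqxx mulr1n; congr (_ - _).
    rewrite rmorph_sum -sumrB; apply: eq_bigr => r _; rewrite /c /e !rmorphM /=; ring.
  set s := \sum_r _ in eB; set b := \sum_r c r i * src r i in eB.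
  set a := \sum_r c r i * prd r i.
  have hs : nc s <= a.
    apply: le_trans (nc_sum _) _; apply: ler_sum => r _.
    rewrite nc_mul nc_real (ger0_norm (mulr_ge0 (hc r i) (hprd r i))).
    by have := ler_wpM2l (mulr_ge0 (hc r i) (hprd r i)) (he r); rewrite mulr1.
  have eJ : Jtmx src prd x k i i = a - b.
    by rewrite mxE eqxx /a /b -sumrB; apply: eq_bigr => r0 _; rewrite /c; ring.
  rewrite eJ ltNge; apply/negP => hN.
  have eN : nc (B i i) ^+ 2 = (complex.Re s - b - complex.Re lam) ^+ 2 +
                              (complex.Im s - complex.Im lam) ^+ 2.
    rewrite nc_sq eB; move: (s) (lam) => [s1 s2] [l1 l2] /=; congr (_ ^+ 2 + _ ^+ 2); ring.
  have hab : a - b < 0 by rewrite -eJ hdiag.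
  have hNb : nc (B i i) <= b - a by move: hN; rewrite opprB leNgt.
  have [hR hI] := diag_arg (nc_ge0 s) (nc_sq s) hs (nc_ge0 _) eN hre hab hNb.
  move/negP: lam0; apply; apply/eqP.
  have -> : lam = Complex (complex.Re lam) (complex.Im lam) by case: (lam).
  by rewrite hR hI.
pose A := - Jtmx src prd x k.
pose D i := nc (B i i) - A i i.
have hD : forall i, 0 < D i by move=> i; rewrite /D /A subr_gt0 [X in X < _]mxE; exact: K4.
have hu : forall i, u i = 0.
  apply: (L2 (C := A + dmx D)).
  - move=> i j ij.
    have -> : (A + dmx D) i j = - Jtmx src prd x k i j.
      by rewrite [LHS]mxE [dmx _ _ _]mxE (negbTE ij) addr0 [A _ _]mxE.
    have := K3 i j ij; have := nc_ge0 (B i j); lra.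
  - move=> p f hf; rewrite mxsub_dmx; last exact: incr_inj.
    apply: lt_le_trans (L1 (P0'_sub hf hP0) (fun i => ltW (hD _))).
    by apply: prodr_gt0 => i _; apply: hD.
  - by move=> i; apply: nc_ge0.
  - move=> i; rewrite (bigD1 i) //=.
    have -> : (A + dmx D) i i = nc (B i i).
      by rewrite [LHS]mxE [dmx _ _ _]mxE eqxx /D; ring.
    have K2 : nc (B i i) * u i <= \sum_(j | j != i) nc (B i j) * u j.
      have := K1 i; rewrite (bigD1 i) //= => /eqP; rewrite addr_eq0 => /eqP h.
      rewrite /u -nc_mul h nc_opp big_mkcond /=; apply: le_trans (nc_sum _) _.
      rewrite [X in _ <= X]big_mkcond /=; apply: ler_sum => j _.
      case: ifP => _; first by rewrite nc_mul.
      by rewrite /nc /= expr0n /= addr0 sqrtr0.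
    have K2' : \sum_(j | j != i) nc (B i j) * u j <= \sum_(j | j != i) Jtmx src prd x k i j * u j.
      apply: ler_sum => j ji; apply: ler_wpM2r; first exact: nc_ge0.
      by apply: K3; rewrite eq_sym.
    have -> : \sum_(j | j != i) (A + dmx D) i j * u j = - \sum_(j | j != i) Jtmx src prd x k i j * u j.
      rewrite -sumrN; apply: eq_bigr => j ji.
      by rewrite [(A + dmx D) _ _]mxE [dmx _ _ _]mxE eq_sym (negbTE ji) addr0 [A _ _]mxE mulNr.
    lra.
apply: (negP v0); apply/eqP/matrixP => a i; rewrite ord1 mxE.
by apply: nc_eq0; apply: hu.
Qed.
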